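(* Let $A:\mathbb R_+\to\mathbb R^{M\times M}$ be continuous with $A(0)=0$, and let $Y$ be the unique solution of the linear matrix ODE $Y'(\tau)=A(\tau)Y(\tau)$, $Y(0)=I_M$. Suppose $Y''(\tau)=B(\tau)Y(\tau)$, where $B(\tau)$ is positive semidefinite for all $\tau\ge0$. Then $A(\tau)$ is positive semidefinite for all $\tau\ge0$.
   Context: A real square matrix $C$ is called positive semidefinite if $b^\top Cb\ge0$ for all vectors $b$; symmetry is not required. *)

(* Defs.v *)
From HB Require Import structures.
From mathcomp Require Import all_boot all_order all_algebra.
From mathcomp Require Import all_classical all_reals all_analysis.
Set Implicit Arguments. Unset Strict Implicit. Unset Printing Implicit Defensive.
Import Order.TTheory GRing.Theory Num.Theory.
Import numFieldNormedType.Exports.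
Local Open Scope classical_set_scope.
Local Open Scope ring_scope.

(* A real square matrix C is positive semidefinite if b^T C b >= 0 for all
   vectors b; symmetry is NOT required. *)
Definition psd (R : realType) (n : nat) (C : 'M[R]_n) : Prop :=
  forall b : 'cV[R]_n, 0 <= (b^T *m C *m b) 0 0.

(* Derivative of a real function f defined on R_+ = [0, +oo) at a point
   t >= 0: the limit of the difference quotient with h -> 0, h <> 0, t + h >= 0
   (so it is the usual two-sided derivative for t > 0 and the right
   derivative at t = 0). *)
Definition has_deriv_Rplus (R : realType) (f : R -> R) (t d : R) : Prop :=
  (fun h : R => h^-1 * (f (t + h) - f t))
    @ within [set h : R | 0 <= t + h] (0 : R)^' --> d.

Definition has_mxderiv_Rplus (R : realType) (n : nat)
  (F : R -> 'M[R]_n) (t : R) (D : 'M[R]_n) : Prop :=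
  forall i j, has_deriv_Rplus (fun s => F s i j) t (D i j).

(* Main.v *)
Require Import Defs.
From HB Require Import structures.
From mathcomp Require Import all_boot all_order all_algebra.
From mathcomp Require Import all_classical all_reals all_analysis.
Import Order.TTheory GRing.Theory Num.Theory.
Import numFieldNormedType.Exports.
Local Open Scope classical_set_scope.
Local Open Scope ring_scope.

Section S.
Variable R : realType.
Local Notation FF t := (within [set h : R | 0 <= t + h] (0 : R)^').

Lemma FF_neq0 (t : R) : \forall h \near FF t, h != 0.
Proof.
have H : (0:R)^' (fun h : R => h != 0) by apply: withinT.
exact: (cvg_within _ H).
Qed.

Lemma FF_to0 (t : R) : (fun h : R => h) @ FF t --> (0:R).
Proof. apply: cvg_trans (cvg_within _) _; apply: cvg_trans (cvg_within _) _. exact: cvg_id. Qed.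

Lemma hd_cst (t c : R) : has_deriv_Rplus (fun _ => c) t 0.
Proof.
rewrite /has_deriv_Rplus.
have -> : (fun h : R => h^-1 * (c - c)) = fun _ => 0 by apply/funext => h; rewrite subrr mulr0.
exact: cvg_cst.
Qed.

Lemma hd_cont (f : R -> R) t d : has_deriv_Rplus f t d ->
  (fun h => f (t + h)) @ FF t --> f t.
Proof.
move=> H.
have E : {near FF t, (fun h => f t + h * (h^-1 * (f (t + h) - f t))) =1 (fun h => f (t + h))}.
  apply: filterS (FF_neq0 t) => h hn /=.
  by rewrite mulrA mulfV // mul1r addrC subrK.
apply: cvg_trans (near_eq_cvg E) _.
have L : (fun h => f t + h * (h^-1 * (f (t + h) - f t))) @ FF t --> f t + 0 * d.
  apply: cvgD; [exact: cvg_cst | apply: cvgM => //; exact: FF_to0].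
by rewrite mul0r addr0 in L.
Qed.

Lemma hd_add (f g : R -> R) t a b : has_deriv_Rplus f t a -> has_deriv_Rplus g t b ->
  has_deriv_Rplus (fun s => f s + g s) t (a + b).
Proof.
move=> Hf Hg; rewrite /has_deriv_Rplus.
have -> : (fun h : R => h^-1 * (f (t + h) + g (t + h) - (f t + g t))) =
   (fun h => h^-1 * (f (t + h) - f t)) + (fun h => h^-1 * (g (t + h) - g t)).
  by apply/funext => h /=; rewrite -mulrDr; congr (_ * _); rewrite opprD addrACA.
exact: cvgD.
Qed.

Lemma hd_mul (f g : R -> R) t a b : has_deriv_Rplus f t a -> has_deriv_Rplus g t b ->
  has_deriv_Rplus (fun s => f s * g s) t (a * g t + f t * b).
Proof.
move=> Hf Hg; rewrite /has_deriv_Rplus.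
have E : {near FF t, (fun h => h^-1 * (f (t + h) - f t) * g (t + h) + f t * (h^-1 * (g (t + h) - g t))) =1 (fun h => h^-1 * (f (t + h) * g (t + h) - f t * g t))}.
  apply: filterE => h /=.
  rewrite mulrCA -mulrA -mulrDr; congr (_ * _).
  by rewrite mulrBl mulrBr addrA subrK.
have L : (fun h => h^-1 * (f (t + h) - f t) * g (t + h) + f t * (h^-1 * (g (t + h) - g t))) @ FF t --> a * g t + f t * b.
  apply: cvgD; [apply: cvgM => //; exact: hd_cont Hg | apply: cvgM => //; exact: cvg_cst].
exact: cvg_trans (near_eq_cvg E) L.
Qed.

Lemma hd_sum n (F : 'I_n -> R -> R) (D : 'I_n -> R) t :
  (forall i, has_deriv_Rplus (F i) t (D i)) ->
  has_deriv_Rplus (fun s => \sum_(i < n) F i s) t (\sum_(i < n) D i).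
Proof.
elim: n F D => [|n IH] F D H.
  rewrite big_ord0.
  have -> : (fun s => \sum_(i < 0) F i s) = fun _ => 0 by apply/funext => s; rewrite big_ord0.
  exact: hd_cst.
rewrite big_ord_recr.
have -> : (fun s => \sum_(i < n.+1) F i s) = fun s => \sum_(i < n) F (widen_ord (leqnSn n) i) s + F ord_max s.
  by apply/funext => s; rewrite big_ord_recr.
apply: hd_add => //; exact: IH.
Qed.


Lemma hd_ext (f g : R -> R) t d : (forall s, f s = g s) -> has_deriv_Rplus f t d -> has_deriv_Rplus g t d.
Proof. by move=> E; have -> : g = f by apply/funext => s; rewrite E. Qed.

Lemma hd_eqd (f : R -> R) t d d' : d = d' -> has_deriv_Rplus f t d -> has_deriv_Rplus f t d'.
Proof. by move=> ->. Qed.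

Lemma hd_mulmx n m (F : R -> 'M[R]_n) (C : 'M[R]_(n, m)) t D i j :
  has_mxderiv_Rplus F t D -> has_deriv_Rplus (fun s => (F s *m C) i j) t ((D *m C) i j).
Proof.
move=> H.
apply: (@hd_ext (fun s => \sum_k F s i k * C k j)); first by move=> s; rewrite mxE.
rewrite mxE; apply: hd_sum => k.
have := @hd_mul _ _ _ _ _ (H i k) (hd_cst t (C k j)).
by rewrite mulr0 addr0.
Qed.

Lemma hd_interior (f : R -> R) t d : 0 < t -> has_deriv_Rplus f t d ->
  derivable f t 1 /\ derive1 f t = d.
Proof.
move=> t0 H.
have N : (0:R)^' [set h : R | 0 <= t + h].
  have N0 : nbhs (0:R) [set h : R | 0 <= t + h].
    apply/nbhs_ballP; exists t => //= h.
    rewrite /ball /= sub0r normrN => /ltrNnormlW ht.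
    by rewrite -(subrr t) lerD2l ltW.
  exact: (cvg_within _ N0).
have H' : (fun h : R => h^-1 * (f (t + h) - f t)) @ (0:R)^' --> d.
  move=> P /H; rewrite /within /=.
  move=> HP; apply: filterS2 N HP => h h1 h2; exact: h2.
have E : (fun h : R => h^-1 *: ((f \o shift t) (h *: 1) - f t)) = (fun h : R => h^-1 * (f (t + h) - f t)).
  apply/funext => h /=; rewrite /shift /=.
  have -> : h%:A = h by exact: mulr1.
  by rewrite (addrC h t).
split; first by rewrite /derivable E; apply/cvg_ex; exists d.
by rewrite derive1E /derive E; apply: cvg_lim.
Qed.

Lemma hd_rcont0 (f : R -> R) d : has_deriv_Rplus f 0 d -> f @ (0:R)^'+ --> f 0.
Proof.
move=> H; have C := hd_cont _ _ _ H.
have E : (fun h => f (0 + h)) = f by apply/funext => h; rewrite add0r.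
rewrite E in C.
move=> P /C; rewrite /within /= => HP.
have HP' : nbhs (0:R) (fun x => x != 0 -> 0 <= 0 + x -> P (f x)) := HP.
change (nbhs (0:R) (fun x => 0 < x -> P (f x))).
move: HP'; apply: filterS => h hh h0; apply: hh; [exact: lt0r_neq0 | by rewrite add0r ltW].
Qed.

Lemma hd_mono (f d : R -> R) : (forall s, 0 <= s -> has_deriv_Rplus f s (d s)) ->
  (forall s, 0 <= s -> 0 <= d s) -> forall t, 0 <= t -> f 0 <= f t.
Proof.
move=> Hd Hpos t t0.
have Di : forall x, x \in `]0, +oo[ -> derivable f x 1 /\ derive1 f x = d x.
  move=> x; rewrite in_itv /= andbT => x0; apply: hd_interior x0 (Hd x (ltW x0)).
apply: (@ger0_derive1_ndecry R f 0) => //.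
- by move=> x /Di [].
- by move=> x xi; have [_ ->] := Di x xi; apply: Hpos; move: xi; rewrite in_itv /= andbT => /ltW.
- apply: derivable_oy_Rcontinuous_within_itvcy; split.
    by move=> x /Di [].
  exact: hd_rcont0 (Hd 0 (lexx 0)).
Qed.

End S.

Theorem lemma7p5 (R : realType) (M : nat) (A B Y Y1 : R -> 'M[R]_M)
  (hAcont : forall i j, {within [set t : R | 0 <= t], continuous (fun t => A t i j)})
  (hA0 : A 0 = 0)
  (hY0 : Y 0 = 1%:M)
  (hY' : forall t : R, 0 <= t -> has_mxderiv_Rplus Y t (Y1 t))
  (hODE : forall t : R, 0 <= t -> Y1 t = A t *m Y t)
  (hY'' : forall t : R, 0 <= t -> has_mxderiv_Rplus Y1 t (B t *m Y t))
  (hB : forall t : R, 0 <= t -> psd (B t)) :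
  forall t : R, 0 <= t -> psd (A t).
Proof.
pose f (c : 'cV[R]_M) s := \sum_(i < M) (Y s *m c) i 0 * (Y1 s *m c) i 0.
pose g (c : 'cV[R]_M) s := \sum_(i < M) (Y s *m c) i 0 * (Y s *m c) i 0.
have Df : forall c x, 0 <= x -> has_deriv_Rplus (f c) x
   (\sum_(i < M) ((Y1 x *m c) i 0 * (Y1 x *m c) i 0 + (Y x *m c) i 0 * ((B x *m Y x) *m c) i 0)).
  move=> c x x0.
  exact: (@hd_sum R M (fun i s => (Y s *m c) i 0 * (Y1 s *m c) i 0) _ x
     (fun i => @hd_mul R _ _ x _ _ (@hd_mulmx R M 1 Y c x (Y1 x) i 0 (hY' x x0))
                                (@hd_mulmx R M 1 Y1 c x (B x *m Y x) i 0 (hY'' x x0)))).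
have Dg : forall c x, 0 <= x -> has_deriv_Rplus (g c) x
   (\sum_(i < M) ((Y1 x *m c) i 0 * (Y x *m c) i 0 + (Y x *m c) i 0 * (Y1 x *m c) i 0)).
  move=> c x x0.
  exact: (@hd_sum R M (fun i s => (Y s *m c) i 0 * (Y s *m c) i 0) _ x
     (fun i => @hd_mul R _ _ x _ _ (@hd_mulmx R M 1 Y c x (Y1 x) i 0 (hY' x x0))
                                (@hd_mulmx R M 1 Y c x (Y1 x) i 0 (hY' x x0)))).
have fpos : forall c s, 0 <= s -> 0 <= f c s.
  move=> c s s0.
  have -> : 0 = f c 0.
    rewrite /f big1 // => i _; rewrite hODE // hA0 !mul0mx.
    by rewrite [X in _ * X]mxE mulr0.
  apply: (@hd_mono R (f c) _ (Df c)) => //.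
  move=> x x0; rewrite big_split /=; apply: addr_ge0.
    by apply: sumr_ge0 => i _; rewrite -expr2 sqr_ge0.
  have := hB x x0 (Y x *m c).
  rewrite -mulmxA mxE => H; apply: le_trans H _; rewrite le_eqVlt; apply/orP; left; apply/eqP.
  by apply: eq_bigr => i _; rewrite mxE mulmxA.
have gmono : forall c t, 0 <= t -> g c 0 <= g c t.
  move=> c; apply: (@hd_mono R (g c) _ (Dg c)).
  move=> x x0; rewrite big_split /= -/(f c x).
  have -> : \sum_(i < M) (Y1 x *m c) i 0 * (Y x *m c) i 0 = f c x.
    by apply: eq_bigr => i _; rewrite mulrC.
  by apply: addr_ge0; apply: fpos.
move=> t t0.
have unitY : Y t \in unitmx.
  rewrite unitmxE unitfE -det_tr; apply/negP => /det0P [w w0 wY].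
  have Yw : Y t *m w^T = 0 by rewrite -(trmxK (Y t)) -trmx_mul wY trmx0.
  have g0 : g w^T t = 0.
    by rewrite /g big1 // => i _; rewrite Yw mxE mul0r.
  have g00 : g w^T 0 = 0.
    apply/eqP; rewrite eq_le; apply/andP; split; first by apply: le_trans (gmono w^T t t0) _; rewrite g0.
    by apply: sumr_ge0 => i _; rewrite -expr2 sqr_ge0.
  have Hz : forall i, true -> (Y 0 *m w^T) i 0 * (Y 0 *m w^T) i 0 = 0.
    have g00' : \sum_(i < M) (Y 0 *m w^T) i 0 * (Y 0 *m w^T) i 0 = 0 := g00.
    move=> i _; apply: (psumr_eq0P _ g00') => // k _; by rewrite -expr2 sqr_ge0.
  move/eqP: w0; apply; apply/rowP => j; rewrite mxE.
  have := Hz j isT; rewrite hY0 mul1mx mxE.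
  by move=> /eqP; rewrite mulf_eq0 orbb => /eqP ->.
move=> b.
have := fpos (invmx (Y t) *m b) t t0.
have Yc : Y t *m (invmx (Y t) *m b) = b by rewrite mulmxA mulmxV // mul1mx.
rewrite /f Yc hODE // -(mulmxA (A t) (Y t)) Yc => H; apply: le_trans H _.
rewrite -mulmxA [X in _ <= X]mxE le_eqVlt; apply/orP; left; apply/eqP.
by apply: eq_bigr => i _; rewrite [b^T 0 i]mxE.
Qed.
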